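(* Let $q$ be a prime power and $\mathcal{C}_2 \subsetneqq \mathcal{C}_1 \subseteq \mathbb{F}_q^{m \times n}$ be $\mathbb{F}_q$-linear codes, $\ell = \dim \mathcal{C}_1 - \dim \mathcal{C}_2$. Fix a subspace $\mathcal{W}$ with $\mathcal{C}_1 = \mathcal{C}_2 \oplus \mathcal{W}$ and an isomorphism $\psi : \mathbb{F}_q^\ell \to \mathcal{W}$; let $\mathbf{x}$ be uniform on $\mathbb{F}_q^\ell$ and $C = \psi(\mathbf{x}) + D$ with $D$ uniform on $\mathcal{C}_2$ independent of $\mathbf{x}$. Let $B \in \mathbb{F}_q^{\mu \times n}$ and $\mathcal{L} = {\rm Row}(B)$. Then, with mutual information computed with logarithms to base $q$, $$I(\mathbf{x}; CB^T) = \dim(\mathcal{C}_2^\perp \cap \mathcal{V}_\mathcal{L}) - \dim(\mathcal{C}_1^\perp \cap \mathcal{V}_\mathcal{L}).$$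
   Context: ${\rm Row}(B)$ is the row space of $B$. For a subspace $\mathcal{L} \subseteq \mathbb{F}_q^n$, $\mathcal{V}_\mathcal{L} = \{V \in \mathbb{F}_q^{m\times n} \mid {\rm Row}(V) \subseteq \mathcal{L}\}$. The dual of a linear code $\mathcal{C} \subseteq \mathbb{F}_q^{m \times n}$ is $\mathcal{C}^\perp = \{D \in \mathbb{F}_q^{m\times n} \mid {\rm Trace}(CD^T) = 0 \ \forall C \in \mathcal{C}\}$. *)

(* Defs.v *)
From HB Require Import structures.
From mathcomp Require Import all_boot all_order all_algebra.
From mathcomp Require Import reals exp.
Set Implicit Arguments. Unset Strict Implicit. Unset Printing Implicit Defensive.
Import Order.TTheory GRing.Theory Num.Theory.
Local Open Scope ring_scope.

Section Defs.
Variable F : finFieldType.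
Variables m n mu : nat.

Definition dual_code (C : {vspace 'M[F]_(m, n)}) : {set 'M[F]_(m, n)} :=
  [set D | [forall c : 'M[F]_(m, n), (c \in C) ==> (\tr (c *m D^T) == 0)]].

Definition VL (B : 'M[F]_(mu, n)) : {set 'M[F]_(m, n)} :=
  [set V | (V <= B)%MS].

Definition dim_set (S : {set 'M[F]_(m, n)}) : nat := \dim (<< enum S >>%VS).
End Defs.

Definition mutual_info (R : realType) (X Y : finType) (b : R) (p : X -> Y -> R) : R :=
  let px := fun x => \sum_(y : Y) p x y in
  let py := fun y => \sum_(x : X) p x y in
  \sum_(x : X) \sum_(y : Y)
     (if p x y == 0 then 0 else p x y * (ln (p x y / (px x * py y)) / ln b)).

(* Joint law of (x, C B^T), where x is uniform on F^l, D uniform on C2,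
   independent of x, and C = psi x + D. *)
Definition joint_xCB (R : realType) (F : finFieldType) (m n mu l : nat)
  (C2 : {vspace 'M[F]_(m, n)}) (psi : 'rV[F]_l -> 'M[F]_(m, n)) (B : 'M[F]_(mu, n))
  (x : 'rV[F]_l) (y : 'M[F]_(m, mu)) : R :=
  \sum_(x' : 'rV[F]_l) \sum_(d : 'M[F]_(m, n) | d \in C2)
     ((#|F|%:R ^+ l)^-1 * (#|[set d' : 'M[F]_(m, n) | d' \in C2]|%:R)^-1 *
      (if (x' == x) && ((psi x' + d) *m B^T == y) then 1 else 0)).

(* Main.v *)
Require Import Defs.
From HB Require Import structures.
From mathcomp Require Import all_boot all_order all_algebra finfield.
From mathcomp Require Import reals exp.
From mathcomp Require Import zify ring lra.
Set Implicit Arguments. Unset Strict Implicit. Unset Printing Implicit Defensive.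
Import Order.TTheory GRing.Theory Num.Theory.
Local Open Scope ring_scope.

Section Ann.
Variables (F : fieldType) (m p : nat).
Local Notation M := 'M[F]_(m, p).

Definition pair (X A : M) : F := \tr (X *m A^T).

Lemma pairDl a X Y A : pair (a *: X + Y) A = a * pair X A + pair Y A.
Proof. by rewrite /pair mulmxDl -scalemxAl mxtraceD mxtraceZ. Qed.

Lemma pairDr a X Y A : pair A (a *: X + Y) = a * pair A X + pair A Y.
Proof. by rewrite /pair linearD linearZ /= mulmxDr -scalemxAr mxtraceD mxtraceZ. Qed.

Lemma pair_suml I (r : seq I) (P : pred I) (G : I -> M) A :
  pair (\sum_(i <- r | P i) G i) A = \sum_(i <- r | P i) pair (G i) A.
Proof.
elim/big_rec2: _ => [|i y1 y2 _ <-]; first by rewrite /pair mul0mx mxtrace0.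
by rewrite /pair mulmxDl mxtraceD.
Qed.

Lemma pairE X A : pair X A = \sum_i \sum_j X i j * A i j.
Proof.
rewrite /pair /mxtrace; apply: eq_bigr => i _; rewrite mxE.
by apply: eq_bigr => j _; rewrite mxE.
Qed.

Lemma pair_delta (i : 'I_m) (j : 'I_p) A : pair (delta_mx i j) A = A i j.
Proof.
rewrite pairE (bigD1 i) //= [X in _ + X]big1 ?addr0; last first.
  move=> k /negbTE ki; rewrite big1 // => l _; rewrite mxE ki mul0r //.
rewrite (bigD1 j) //= [X in _ + X]big1 ?addr0; last first.
  by move=> l /negbTE lj; rewrite mxE eqxx lj mul0r.
by rewrite mxE !eqxx mul1r.
Qed.

Definition annT (U : {vspace M}) (A : M) : 'rV[F]_(\dim U) :=
  \row_i pair (vbasis U)`_i A.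

Lemma annT_linear U : linear (annT U).
Proof. by move=> a X Y; apply/rowP => i; rewrite !mxE pairDr. Qed.

HB.instance Definition _ U := GRing.isLinear.Build F M 'rV[F]_(\dim U) *:%R (annT U) (annT_linear U).

Definition Ann U : {vspace M} := lker (linfun (annT U)).

Lemma memAnn (U : {vspace M}) A : reflect (forall X, X \in U -> pair X A = 0) (A \in Ann U).
Proof.
rewrite memv_ker lfunE; apply: (iffP eqP) => [h X /coord_vbasis -> | h].
  rewrite pair_suml big1 // => i _.
  rewrite /pair -scalemxAl mxtraceZ.
  have := congr1 (fun Z : 'rV[F]_(\dim U) => Z 0 i) h; rewrite !mxE /pair => ->; exact: mulr0.
by apply/rowP => i; rewrite !mxE; apply: h; rewrite vbasis_mem ?memt_nth.
Qed.

Lemma dimfM : \dim (fullv : {vspace M}) = (m * p)%N.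
Proof. by rewrite dimvf dim_matrix. Qed.

Lemma dimAnn_ge (U : {vspace M}) : (m * p <= \dim (Ann U) + \dim U)%N.
Proof.
have := limg_ker_dim (linfun (annT U)) fullv.
rewrite capfv dimfM => <-.
rewrite leq_add2l.
have := dimvS (subvf (limg (linfun (annT U)))).
by rewrite dimvf dim_matrix /= mul1r.
Qed.

Lemma Ann_compl (U : {vspace M}) : (Ann U :&: Ann U^C = 0)%VS.
Proof.
apply/eqP; rewrite -subv0; apply/subvP => A /memv_capP [/memAnn h1 /memAnn h2].
rewrite memv0; apply/eqP/matrixP => i j; rewrite mxE -pair_delta.
have : delta_mx i j \in (U + U^C)%VS by rewrite addv_complf memvf.
case/memv_addP => u uU [v vV ->].
by rewrite -[u]scale1r pairDl h1 // h2 // mulr0 addr0.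
Qed.

Lemma dimAnn (U : {vspace M}) : (\dim (Ann U) + \dim U = m * p)%N.
Proof.
have h1 := dimAnn_ge U; have h2 := dimAnn_ge U^C.
have := dimv_sum_cap (Ann U) (Ann U^C); rewrite Ann_compl dimv0 addn0.
have := dimvS (subvf (Ann U + Ann U^C)); rewrite dimfM.
rewrite dimv_compl dimfM in h2.
have := dimvS (subvf U); rewrite dimfM.
lia.
Qed.
End Ann.

Section Dims.
Variables (F : finFieldType) (m n mu : nat) (B : 'M[F]_(mu, n)).

Definition fB : 'Hom('M[F]_(m, n), 'M[F]_(m, mu)) := linfun (mulmxr B^T).
Definition hB : 'Hom('M[F]_(m, mu), 'M[F]_(m, n)) := linfun (mulmxr B).

Lemma fBE c : fB c = c *m B^T. Proof. by rewrite lfunE. Qed.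
Lemma hBE c : hB c = c *m B. Proof. by rewrite lfunE. Qed.

Lemma SC_eq (C : {vspace 'M[F]_(m, n)}) :
  dual_code C :&: VL m B =i (hB @: Ann (fB @: C))%VS.
Proof.
move=> V; rewrite !inE; apply/andP/idP.
  case=> /forallP h /submxP [A defV]; subst V; apply/memv_imgP; exists A; last by rewrite hBE.
  apply/memAnn => Y /memv_imgP [c cC ->]; rewrite fBE /pair.
  by have := h c; rewrite cC trmx_mul mulmxA /= => /eqP.
case/memv_imgP => A /memAnn hA ->; rewrite hBE; split; last exact: submxMl.
apply/forallP => c; apply/implyP => cC; rewrite trmx_mul mulmxA; apply/eqP.
have := hA (c *m B^T); rewrite /pair; apply.
by have := memv_img fB cC; rewrite fBE.
Qed.

Lemma dim_set_vs (S : {set 'M[F]_(m, n)}) (U : {vspace 'M[F]_(m, n)}) :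
  S =i U -> dim_set S = \dim U.
Proof.
move=> hS; rewrite /dim_set; congr (\dim _); apply/eqP; rewrite eqEsubv; apply/andP; split.
  by apply/span_subvP => v; rewrite mem_enum hS.
by apply/subvP => v vU; apply: memv_span; rewrite mem_enum hS.
Qed.

Lemma dimSC (C : {vspace 'M[F]_(m, n)}) :
  (dim_set (dual_code C :&: VL m B) + \dim (fB @: C) + \dim (lker hB) = m * mu)%N.
Proof.
rewrite (dim_set_vs (SC_eq C)).
have kerS : (lker hB <= Ann (fB @: C))%VS.
  apply/subvP => A; rewrite memv_ker hBE => /eqP AB0; apply/memAnn => Y /memv_imgP [c cC ->].
  by rewrite fBE /pair -mulmxA -trmx_mul AB0 trmx0 mulmx0 mxtrace0.
have := limg_ker_dim hB (Ann (fB @: C)); rewrite (capv_idPr kerS).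
have := dimAnn (fB @: C); by move=> <- <-; rewrite [LHS]addnC addnA.
Qed.

Variables (l : nat) (psi : {linear 'rV[F]_l -> 'M[F]_(m, n)}).
Definition gB := (fB \o linfun psi)%VF.

Lemma dimK (C1 C2 W : {vspace 'M[F]_(m, n)}) :
  (C2 + W)%VS = C1 -> (forall x, psi x \in W) ->
  (forall w, w \in W -> exists x, psi x = w) ->
  (\dim (gB @^-1: (fB @: C2))%VS + \dim (fB @: C1) = l + \dim (fB @: C2))%N.
Proof.
move=> hC hW hS.
have limpsi : limg (linfun psi) = W.
  apply/eqP; rewrite eqEsubv; apply/andP; split.
    by apply/subvP => w /memv_imgP [x _ ->]; rewrite lfunE.
  by apply/subvP => w /hS [x <-]; rewrite -(lfunE psi) memv_img ?memvf.
have limgg : limg gB = (fB @: W)%VS by rewrite limg_comp limpsi.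
have I1 : (fB @: C1 = fB @: C2 + limg gB)%VS by rewrite -hC limgD limgg.
set I2 := (fB @: C2)%VS; set K := (gB @^-1: I2)%VS.
have kerK : (lker gB <= K)%VS by rewrite -lpreim0 lpreimS ?sub0v.
have := limg_ker_dim gB K; rewrite (capv_idPr kerK).
have -> : (gB @: K = I2 :&: limg gB)%VS.
  by rewrite /K -lpreim_cap_limg lpreimK // capvSr.
have := limg_ker_dim gB fullv; rewrite capfv dimvf dim_matrix /= mul1r.
have := dimv_sum_cap I2 (limg gB).
rewrite I1 -/I2.
move: (\dim (lker gB)) (\dim (limg gB)) (\dim I2) (\dim K) (\dim (I2 + limg gB)) (\dim (I2 :&: limg gB)) => a b c d e f; lia.
Qed.
End Dims.

Section Prob.
Variables (R : realType) (F : finFieldType) (m n mu l : nat).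
Variables (C2 : {vspace 'M[F]_(m, n)}) (psi : {linear 'rV[F]_l -> 'M[F]_(m, n)}).
Variable (B : 'M[F]_(mu, n)).

Let p := joint_xCB R C2 psi B.
Let c0 : R := (#|F|%:R ^+ l)^-1 * (#|[set d' : 'M[F]_(m, n) | d' \in C2]|%:R)^-1.
Let N (z : 'M[F]_(m, mu)) : nat := #|[set d : 'M[F]_(m, n) | (d \in C2) && (d *m B^T == z)]|.

Lemma jointE x y : p x y = c0 * (N (y - psi x *m B^T))%:R.
Proof.
rewrite /p /joint_xCB (bigD1 x) //= [X in _ + X]big1 ?addr0; last first.
  by move=> x' /negbTE nx; apply: big1 => d _; rewrite nx /= mulr0.
rewrite -mulr_sumr eqxx /=; congr (_ * _).
rewrite -big_mkcondr /= -sumr_const; apply: eq_bigl => d.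
by rewrite inE mulmxDl addrC eq_sym -subr_eq eq_sym.
Qed.

Lemma C2card_gt0 : (0 < #|[set d' : 'M[F]_(m, n) | d' \in C2]|)%N.
Proof. by apply/card_gt0P; exists 0; rewrite inE mem0v. Qed.

Lemma pxE x : \sum_y p x y = (#|F|%:R ^+ l)^-1.
Proof.
rewrite /p /joint_xCB exchange_big /=.
under eq_bigr => x' _ do rewrite exchange_big /=.
have inner x' d : \sum_(y : 'M[F]_(m, mu))
    ((#|F|%:R ^+ l)^-1 * (#|[set d' : 'M[F]_(m, n) | d' \in C2]|%:R)^-1 *
      (if (x' == x) && ((psi x' + d) *m B^T == y) then 1 else 0)) = c0 * (x' == x)%:R.
  rewrite -mulr_sumr; congr (_ * _); case: eqP => _ /=; last by rewrite big1.
  rewrite (bigD1 ((psi x' + d) *m B^T)) //= eqxx big1 ?addr0 // => y ny.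
  by rewrite eq_sym (negbTE ny).
under eq_bigr => x' _ do under eq_bigr => d _ do rewrite inner.
rewrite (bigD1 x) //= [X in _ + X]big1 ?addr0; last first.
  by move=> x' /negbTE nx; apply: big1 => d _; rewrite nx mulr0.
rewrite eqxx mulr1.
have -> : \sum_(d | d \in C2) c0 = \sum_(d in [set d' : 'M[F]_(m, n) | d' \in C2]) c0.
  by apply: eq_bigl => d; rewrite inE.
rewrite sumr_const /c0 -[_ / _ *+ _]mulr_natr -mulrA mulVf ?mulr1 //.
by rewrite pnatr_eq0 -lt0n C2card_gt0.
Qed.

Lemma N_in z : z \in (fB m B @: C2)%VS -> N z = N 0.
Proof.
case/memv_imgP => d0 d0C ->; rewrite fBE /N.
rewrite -[RHS](card_imset _ (addIr d0)); apply: eq_card => d.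
rewrite inE; apply/andP/imsetP.
  case=> dC /eqP dz; exists (d - d0); last by rewrite subrK.
  by rewrite inE rpredB //= mulmxBl dz subrr eqxx.
case=> d'; rewrite inE => /andP [d'C /eqP e] ->; split; first by rewrite rpredD.
by rewrite mulmxDl e add0r.
Qed.

Lemma N_out z : z \notin (fB m B @: C2)%VS -> N z = 0%N.
Proof.
move=> hz; apply/eqP; rewrite cards_eq0; apply/eqP/setP => d; rewrite !inE.
apply/negbTE; apply: contra hz => /andP [dC /eqP <-].
by rewrite -fBE memv_img.
Qed.

Lemma N0_gt0 : (0 < N 0)%N.
Proof. by apply/card_gt0P; exists 0; rewrite inE mem0v mul0mx eqxx. Qed.

Let I2 := (fB m B @: C2)%VS.
Let K := (gB B psi @^-1: I2)%VS.

Lemma gBE x : gB B psi x = psi x *m B^T.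
Proof. by rewrite comp_lfunE fBE lfunE. Qed.

Lemma yI x y : p x y != 0 -> y - psi x *m B^T \in I2.
Proof.
move=> pxy; case: (boolP (_ \in I2)) => // h.
by move: pxy; rewrite jointE N_out // mulr0 eqxx.
Qed.

Lemma pxyE x y : p x y != 0 -> p x y = c0 * (N 0)%:R.
Proof. by move=> pxy; rewrite jointE N_in // yI. Qed.

Lemma pyE x y : p x y != 0 -> \sum_x' p x' y = c0 * (N 0)%:R * #|K|%:R.
Proof.
move=> pxy; have hy := yI pxy.
have e x' : p x' y = c0 * (if x - x' \in K then N 0 else 0%N)%:R.
  rewrite jointE /K -memv_preim gBE.
  have -> : y - psi x' *m B^T = (y - psi x *m B^T) + psi (x - x') *m B^T.
    by rewrite linearB mulmxBl addrA subrK.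
  case: ifP => h; first by rewrite N_in // rpredD.
  rewrite N_out //; apply: contraFN h => hh.
  by rewrite -(rpredDl _ hy).
under eq_bigr => x' _ do rewrite e.
rewrite (reindex_inj (subrI x)) /=.
have sK z : x - (x - z) = z by rewrite opprB addrC subrK.
rewrite (eq_bigr (fun j => if j \in K then c0 * (N 0)%:R else 0)); last first.
  by move=> j _; rewrite sK; case: ifP => _; rewrite ?mulr0.
by rewrite -big_mkcond /= sumr_const [RHS]mulr_natr.
Qed.

Lemma MI_eq : mutual_info (#|F|%:R : R) p = l%:R - (\dim K)%:R.
Proof.
have q1 : 1 < (#|F|%:R : R) by rewrite ltr1n card_finNzRing_gt1.
have q0 : 0 < (#|F|%:R : R) by apply: lt_trans q1.
have lnq : ln (#|F|%:R : R) != 0 by rewrite gt_eqF // ln_gt0.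
set L : R := l%:R - (\dim K)%:R.
rewrite /mutual_info /=.
have term x y : (if p x y == 0 then 0 else p x y * (ln (p x y /
   ((\sum_y0 p x y0) * (\sum_x0 p x0 y))) / ln #|F|%:R)) = p x y * L.
  case: eqP => [->|/eqP pxy]; first by rewrite mul0r.
  congr (_ * _); rewrite pxE (pyE pxy) (pxyE pxy).
  have P0 : c0 * (N 0)%:R != 0 by rewrite -(pxyE pxy).
  rewrite card_vspace natrX invfM invrK invfM mulrCA mulrA -mulrA mulVKf //.
  rewrite ln_div; [|by rewrite posrE exprn_gt0..]; rewrite !lnXn // /L.
  by rewrite -[ln _ *+ l]mulr_natr -[ln _ *+ \dim K]mulr_natr -mulrBr mulrC mulrA mulVf // mul1r.
under eq_bigr => x _ do under eq_bigr => y _ do rewrite term.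
under eq_bigr => x _ do rewrite -mulr_suml pxE.
rewrite sumr_const card_mx mul1n -[_ *+ _]mulr_natl natrX mulrA mulfV ?mul1r //.
by rewrite expf_neq0 // gt_eqF.
Qed.
End Prob.

Set Strict Implicit. Unset Implicit Arguments.

Theorem proposition4 (R : realType) (F : finFieldType) (m n mu l : nat)
  (C1 C2 W : {vspace 'M[F]_(m, n)})
  (psi : {linear 'rV[F]_l -> 'M[F]_(m, n)}) (B : 'M[F]_(mu, n)) :
  (C2 <= C1)%VS -> C2 != C1 ->
  l = (\dim C1 - \dim C2)%N ->
  (C2 + W)%VS = C1 -> directv (C2 + W) ->
  injective psi -> (forall x, psi x \in W) ->
  (forall w, w \in W -> exists x, psi x = w) ->
  mutual_info (#|F|%:R : R) (joint_xCB R C2 psi B) =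
    (dim_set (dual_code C2 :&: VL m B))%:R - (dim_set (dual_code C1 :&: VL m B))%:R.
Proof.
move=> _ _ _ hC _ _ hW hS.
rewrite MI_eq.
have hK := dimK B hC hW hS; have h1 := dimSC B C1; have h2 := dimSC B C2.
have e : (l + dim_set (dual_code C1 :&: VL m B) =
          \dim (gB B psi @^-1: (fB m B @: C2)) + dim_set (dual_code C2 :&: VL m B))%N.
  move: hK h1 h2.
  move: (\dim (gB B psi @^-1: (fB m B @: C2))) (\dim (fB m B @: C1)) (\dim (fB m B @: C2))
    (dim_set (dual_code C1 :&: VL m B)) (dim_set (dual_code C2 :&: VL m B)) (\dim (lker (hB m B))).
  move=> a b c d e f; lia.
have eR : (l%:R + (dim_set (dual_code C1 :&: VL m B))%:R =
   (\dim (gB B psi @^-1: (fB m B @: C2)))%:R + (dim_set (dual_code C2 :&: VL m B))%:R :> R).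
  by rewrite -!natrD e.
lra.
Qed.
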